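(* Let $M$ be a finite regular cell complex with cell weights $w_\sigma>0$. For every function $f$ on $M$ (i.e. combinatorial $0$-form), $$\int_M\Delta f=0.$$
   Context: $C_*(M)$ is the real cellular chain complex with boundary $\partial$, cells oriented, and inner product $\langle\sigma,\sigma'\rangle=\delta_{\sigma,\sigma'}w_\sigma$. A combinatorial differential $d$-form is a linear map $\omega:C_*(M)\to C_*(M)$ with $\omega(C_p)\subset C_{p-d}$ such that $\omega(\alpha)$ is a combination of $(p-d)$-dimensional faces of each $p$-cell $\alpha$; $\Omega^d(M)$ is their space. A function $f$ is a $0$-form, $f(\sigma)=f_\sigma\sigma$, and we write $f(\sigma)$ for $f_\sigma$. The differential is $d\omega=\partial\circ\omega-(-1)^d\omega\circ\partial$; $\Omega^*(M)$ carries the inner product $\langle u,v\rangle=\sum_\sigma\frac1{w_\sigma}\langle u(\sigma),v(\sigma)\rangle$, $d^*$ is the adjoint of $d$, and $\Delta=dd^*+d^*d$. Thus $\Delta f$ is again a $0$-form, i.e. a function. For a function $h$, $\int_M h=\sum_\sigma h(\sigma)$ over all cells of $M$. *)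

(* Defs.v *)
From HB Require Import structures.
From mathcomp Require Import all_boot all_order all_algebra.
From mathcomp Require Import reals.
Set Implicit Arguments. Unset Strict Implicit. Unset Printing Implicit Defensive.
Import Order.TTheory GRing.Theory Num.Theory.
Local Open Scope ring_scope.

(* A finite (combinatorial) weighted cell complex M with real coefficients.
   - cell      : the finite set of cells
   - cdim s    : the dimension of the cell s
   - face t s  : t is a face of s (reflexive: every cell is a face of itself)
   - inc s t   : the incidence number [s : t], so that the cellular boundary
                 is  d s = \sum_t inc s t * t
   - weight s  : the weight w_s of the cell s *)
Record cell_complex (R : realType) := CellComplex {
  cell :> finType;
  cdim : cell -> nat;
  face : rel cell;
  inc : cell -> cell -> R;
  weight : cell -> R
}.

Arguments cdim {R} c _.
Arguments face {R} c _ _.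
Arguments inc {R} c _ _.
Arguments weight {R} c _.

Section Defs.
Variables (R : realType) (M : cell_complex R).

Definition regular_cell_complex : Prop :=
  (forall s, face M s s) /\
  (forall s t, face M s t -> face M t s -> s = t) /\
  (forall r s t, face M r s -> face M s t -> face M r t) /\
  (forall s t, face M t s -> t != s -> (cdim M t < cdim M s)%N) /\
  (forall s t, (inc M s t != 0) = (face M t s && ((cdim M t).+1 == cdim M s)%N)) /\
  (forall s t, inc M s t != 0 -> inc M s t = 1 \/ inc M s t = -1) /\
      (forall s r, \sum_(t : M) inc M s t * inc M t r = 0).

Definition positive_weights : Prop := forall s : M, 0 < weight M s.

Definition chain := M -> R.

Definition chain_inner (c c' : chain) : R :=
  \sum_(s : M) c s * c' s * weight M s.

(* A linear map C_*(M) -> C_*(M) is represented by its matrix in the cell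
   basis:  om(a) = \sum_b om a b * b. *)
Definition cform := M -> M -> R.

Definition form_at (om : cform) (a : M) : chain := fun b => om a b.

(* composition of linear maps:  (om1 \o om2)(a) = om1 (om2 a) *)
Definition fcomp (om1 om2 : cform) : cform :=
  fun a c => \sum_(b : M) om2 a b * om1 b c.

Definition bd : cform := fun a b => inc M a b.

Definition is_dform (d : nat) (om : cform) : Prop :=
  forall a b, om a b != 0 -> face M b a && (cdim M b + d == cdim M a)%N.

Definition hom_comp (d : nat) (om : cform) : cform :=
  fun a b => if (cdim M b + d == cdim M a)%N then om a b else 0.

Definition maxdim : nat := \max_(s : M) cdim M s.

Definition in_Omega (om : cform) : Prop :=
  (forall d, is_dform d (hom_comp d om)) /\
  om = (fun a b => \sum_(d < maxdim.+1) hom_comp d om a b).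

Definition dhom (d : nat) (om : cform) : cform :=
  fun a b => fcomp bd om a b - (-1) ^+ d * fcomp om bd a b.

Definition dform (om : cform) : cform :=
  fun a b => \sum_(d < maxdim.+1) dhom d (hom_comp d om) a b.

Definition form_inner (u v : cform) : R :=
  \sum_(s : M) (weight M s)^-1 * chain_inner (form_at u s) (form_at v s).

Definition is_adjoint_of_d (dstar : cform -> cform) : Prop :=
  (forall v, in_Omega v -> in_Omega (dstar v)) /\
  (forall u v, in_Omega u -> in_Omega v ->
     form_inner (dform u) v = form_inner u (dstar v)).

Definition laplacian (dstar : cform -> cform) (om : cform) : cform :=
  fun a b => dform (dstar om) a b + dstar (dform om) a b.

(* functions = 0-forms: f(s) = f_s s *)
Definition fun_form (f : M -> R) : cform :=
  fun a b => if a == b then f a else 0.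

(* the function underlying a 0-cform h: h(s) is the coefficient of s in h(s) *)
Definition form_fun (h : cform) : M -> R := fun s => h s s.

Definition integral (h : M -> R) : R := \sum_(s : M) h s.

End Defs.

(* Main.v *)
Require Import Defs.
From HB Require Import structures.
From mathcomp Require Import all_boot all_order all_algebra.
From mathcomp Require Import reals.
From mathcomp Require Import zify ring.
From Stdlib Require Import FunctionalExtensionality.
Import Order.TTheory GRing.Theory Num.Theory.
Local Open Scope ring_scope.

Lemma hcS (R : realType) (M : cell_complex R) d (f : M -> R) (x y : M) :
  hom_comp d.+1 (fun_form f) x y = 0.
Proof.
rewrite /hom_comp /fun_form; case: ifP => // /eqP H; case: eqP => // E.
subst y; exfalso; lia.
Qed.

Lemma dform_fun (R : realType) (M : cell_complex R) (f : M -> R) (a b : M) :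
  dform (fun_form f) a b = inc M a b * (f a - f b).
Proof.
rewrite /dform big_ord_recl big1 ?addr0.
- rewrite /dhom /fcomp /bd expr0 mul1r.
  rewrite (bigD1 a) //= big1 ?addr0; last first.
    move=> c; rewrite eq_sym => /negPf ca; rewrite /hom_comp /fun_form ca.
    by case: ifP; rewrite mul0r.
  rewrite (bigD1 b) //= [\sum_(i | i != b) _]big1 ?addr0; last first.
    move=> c /negPf cb; rewrite /hom_comp /fun_form cb.
    by case: ifP; rewrite mulr0.
  rewrite /hom_comp /fun_form !addn0 !eqxx; ring.
- move=> i _; rewrite /dhom /fcomp !big1 ?mulr0 ?subr0 // => c _;
  by rewrite hcS ?mulr0 ?mul0r.
Qed.

Lemma dform_diag (R : realType) (M : cell_complex R)
  (HM : regular_cell_complex M) (g : cform M) (a : M) : dform g a a = 0.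
Proof.
case: HM => _ [_ [_ [_ [Hinc _]]]].
rewrite /dform big1 // => d _; rewrite /dhom /fcomp /bd !big1 ?mulr0 ?subr0 //.
- move=> c _; rewrite /hom_comp; case: ifP; last by rewrite mulr0.
  move=> /eqP H; have [->|nz] := eqVneq (inc M a c) 0; first by rewrite mul0r.
  move: nz; rewrite Hinc => /andP [_ /eqP E]; exfalso; lia.
- move=> c _; rewrite /hom_comp; case: ifP; last by rewrite mul0r.
  move=> /eqP H; have [->|nz] := eqVneq (inc M c a) 0; first by rewrite mulr0.
  move: nz; rewrite Hinc => /andP [_ /eqP E]; exfalso; lia.
Qed.

Lemma in_Omega_face (R : realType) (M : cell_complex R)
  (HM : regular_cell_complex M) (G : cform M) :
  (forall a b, G a b != 0 -> face M b a) -> in_Omega G.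
Proof.
move=> HG; case: HM => _ [_ [_ [Hdim _]]]; split.
- move=> d a b; rewrite /hom_comp; case: ifP => [H nz|]; last by rewrite eqxx.
  by rewrite HG.
- apply: functional_extensionality => a; apply: functional_extensionality => b.
  have [z|nz] := eqVneq (G a b) 0.
    by rewrite z big1 // => i _; rewrite /hom_comp z; case: ifP.
  have hf := HG _ _ nz.
  have le : (cdim M b <= cdim M a)%N.
    have [->|ne] := eqVneq b a; first by [].
    by apply: ltnW; apply: Hdim.
  have lem : (cdim M a <= maxdim M)%N.
    by rewrite /maxdim; apply: (leq_bigmax a).
  have kl : (cdim M a - cdim M b < (maxdim M).+1)%N by lia.
  rewrite (bigD1 (Ordinal kl)) //= big1 ?addr0.
    by rewrite /hom_comp /=; case: ifP => // /eqP; lia.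
  move=> i ne; rewrite /hom_comp; case: ifP => // /eqP H; exfalso.
  move/eqP: ne; apply; apply: val_inj => /=; lia.
Qed.

Theorem corollary3p6 (R : realType) (M : cell_complex R)
  (HM : regular_cell_complex M) (Hw : positive_weights M)
  (dstar : cform M -> cform M) (Hdstar : is_adjoint_of_d dstar)
  (f : M -> R) :
  integral (form_fun (laplacian dstar (fun_form f))) = 0.
Proof.
rewrite /integral /form_fun /laplacian big_split /=.
rewrite big1 ?add0r; last by move=> s _; apply: dform_diag.
have HM' := HM; case: HM' => Hrefl [_ [_ [_ [Hinc _]]]].
have om1 : in_Omega (@fun_form _ M (fun _ => 1)).
  apply: in_Omega_face => // a b; rewrite /fun_form.
  by case: (eqVneq a b) => [->|_]; rewrite ?eqxx.

have omd : in_Omega (dform (fun_form f)).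
  apply: in_Omega_face => // a b; rewrite dform_fun.
  have [->|nz] := eqVneq (inc M a b) 0; first by rewrite mul0r eqxx.
  by move: nz; rewrite Hinc => /andP [].
have E : \sum_s dstar (dform (fun_form f)) s s =
   form_inner (@fun_form _ M (fun _ => 1)) (dstar (dform (fun_form f))).
  rewrite /form_inner; apply: eq_bigr => s _.
  rewrite /chain_inner /form_at (bigD1 s) //= big1 ?addr0; last first.
    by move=> t; rewrite eq_sym => /negPf st; rewrite /fun_form st !mul0r.
  rewrite /fun_form eqxx mul1r mulrC -mulrA mulfV ?mulr1 //.
  by apply: lt0r_neq0; apply: Hw.
rewrite E -(proj2 Hdstar) //.
rewrite /form_inner big1 // => s _; rewrite /chain_inner big1 ?mulr0 //.
by move=> t _; rewrite /form_at dform_fun subrr !mulr0 !mul0r.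
Qed.
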